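(* For any connected graph $G$ of order $n \ge 2$ and for any positive integer $k$, $1\le \dim_{k,f}(G)\le \frac{n}{2}$.
   Context: All graphs are finite, simple, undirected and connected. $d(x,y)$ is the length of a shortest $x$–$y$ path in $G$. For a positive integer $k$, $d_k(x,y)=\min\{d(x,y),k+1\}$ and $R_k\{x,y\}=\{z\in V(G): d_k(x,z)\neq d_k(y,z)\}$. For a function $g$ on $V(G)$ and $U\subseteq V(G)$, $g(U)=\sum_{s\in U}g(s)$. A function $h:V(G)\to[0,1]$ is a $k$-truncated resolving function of $G$ if $h(R_k\{x,y\})\ge 1$ for all distinct $x,y\in V(G)$. The fractional $k$-truncated metric dimension is $\dim_{k,f}(G)=\min\{h(V(G)): h \text{ is a } k\text{-truncated resolving function of } G\}$. *)

(* Defs.v *)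
From HB Require Import structures.
From mathcomp Require Import all_boot all_order all_algebra.
From mathcomp Require Import boolp classical_sets reals.
Set Implicit Arguments. Unset Strict Implicit. Unset Printing Implicit Defensive.
Import Order.TTheory GRing.Theory Num.Theory.

Definition simple_graph (T : finType) (e : rel T) : Prop :=
  symmetric e /\ irreflexive e.

Definition connected_graph (T : finType) (e : rel T) : Prop :=
  forall x y : T, connect e x y.

Fixpoint walk_le (T : finType) (e : rel T) (n : nat) (x y : T) : bool :=
  match n with
  | 0 => x == y
  | n'.+1 => walk_le e n' x y || [exists z, e x z && walk_le e n' z y]
  end.

(* graph distance d(x,y): least n with a walk of length <= n
   (for a connected graph this is < #|T|, so the search range suffices) *)
Definition dist (T : finType) (e : rel T) (x y : T) : nat :=
  find (fun n => walk_le e n x y) (iota 0 #|T|).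

Definition distk (T : finType) (e : rel T) (k : nat) (x y : T) : nat :=
  minn (dist e x y) k.+1.

Definition Rk (T : finType) (e : rel T) (k : nat) (x y : T) : {set T} :=
  [set z | distk e k x z != distk e k y z].

Local Open Scope ring_scope.

Definition k_truncated_resolving_function (R : realType) (T : finType)
    (e : rel T) (k : nat) (h : T -> R) : Prop :=
  (forall v, 0 <= h v <= 1) /\
  (forall x y : T, x != y -> 1 <= \sum_(z in Rk e k x y) h z).

Local Open Scope classical_set_scope.

(* dim_{k,f}(G): the minimum (taken here as the infimum, which is attained)
   of h(V(G)) over k-truncated resolving functions h *)
Definition frac_k_trunc_dim (R : realType) (T : finType) (e : rel T) (k : nat) : R :=
  inf [set (\sum_(v : T) h v)%R | h in [set h : T -> R |
         k_truncated_resolving_function e k h]].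

(* Main.v *)
Require Import Defs.
From mathcomp Require Import all_boot all_order all_algebra.
From mathcomp Require Import boolp classical_sets reals.
Import Order.TTheory GRing.Theory Num.Theory.
Local Open Scope ring_scope.

Lemma dist_self (T : finType) (e : rel T) x : dist e x x = 0%N.
Proof.
rewrite /dist; case: #|T| => [|m] //=; by rewrite eqxx.
Qed.

Lemma dist_neq (T : finType) (e : rel T) x y : x != y -> (0 < #|T|)%N ->
  (0 < dist e x y)%N.
Proof.
move=> nxy; rewrite /dist; case: #|T| => [|m] //= _.
by rewrite (negbTE nxy).
Qed.

Lemma in_Rk (T : finType) (e : rel T) k x y : x != y -> (0 < #|T|)%N ->
  x \in Rk e k x y.
Proof.
move=> nxy hT; rewrite inE /distk dist_self min0n.
rewrite eq_sym -lt0n.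
have h := @dist_neq T e y x.
by rewrite leq_min h // eq_sym.
Qed.

Theorem proposition2p6 (R : realType) (T : finType) (e : rel T) (k : nat) :
  simple_graph e -> connected_graph e -> (2 <= #|T|)%N -> (0 < k)%N ->
  1 <= frac_k_trunc_dim R e k <= (#|T|%:R / 2 : R).
Proof.
move=> _ _ hT _.
have hT0 : (0 < #|T|)%N by apply: leq_trans hT.
set S := [set (\sum_(v : T) h v)%R | h in [set h : T -> R |
         k_truncated_resolving_function e k h]]%classic.
have lbS : forall s, S s -> 1 <= s.
  move=> s [h [h01 hres] <-].
  have [x [y nxy]] : exists x y : T, x != y.
    have : (1 < #|T|)%N by [].
    case/card_gt1P => x [y [_ _ nxy]]; by exists x, y.
  apply: le_trans (hres x y nxy) _.
  rewrite [X in _ <= X](bigID (fun z => z \in Rk e k x y)) /= lerDl.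
  by apply: sumr_ge0 => i _; case/andP: (h01 i).
have hS : S (\sum_(v : T) (fun _ => 2^-1 : R) v).
  exists (fun _ => 2^-1) => //; split.
    move=> v; rewrite invr_ge0 ler0n /= invf_le1 ?ler1n //.
  move=> x y nxy.
  rewrite (bigD1 x) ?in_Rk //= (bigD1 y) /=; last first.
    rewrite inE [y == x]eq_sym nxy /=.
    have : y \in Rk e k y x by apply: in_Rk; rewrite // eq_sym.
    by rewrite /Rk !inE eq_sym andbT.
  have s0 : (0:R) <= \sum_(i | (i \in Rk e k x y) && (i != x) && (i != y)) 2^-1 by apply: sumr_ge0 => i _; rewrite invr_ge0.
  move: s0; set t := \sum_(_ | _) _ => s0.
  have h2 : (1:R) = 2^-1 + 2^-1 by rewrite {1}(splitr 1) !mul1r.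
  by rewrite {1}h2 addrA lerDl.
have hlb : has_lbound S by exists 1 => s /lbS.
apply/andP; split.
  apply: lb_le_inf; first by exists (\sum_(v : T) (fun _ => 2^-1 : R) v).
  by move=> s /lbS.
apply: le_trans (ge_inf hlb hS) _.
by rewrite sumr_const mulr_natl.
Qed.
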